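(* For every integer $n \geq 3$, $\gamma_{b,2}(C_3 \square C_n) = \left\lceil \frac{2n}{3} \right\rceil$.
   Context: For a graph $G$, a $2$-limited broadcast is a function $f: V(G) \to \{0,1,2\}$. A vertex $u$ hears the broadcast from $v$ if $f(v) > 0$ and $d(u,v) \leq f(v)$, where $d$ is the distance in $G$. The broadcast $f$ is dominating if every vertex of $G$ hears the broadcast from some vertex. The cost of $f$ is $\sum_{v \in V(G)} f(v)$. The $2$-limited broadcast domination number $\gamma_{b,2}(G)$ is the minimum cost of a $2$-limited dominating broadcast on $G$. $C_n$ denotes the cycle on $n$ vertices, $P_n$ the path on $n$ vertices, and $\square$ the Cartesian product of graphs. *)

(* Defs.v *)
From mathcomp Require Import all_boot.
Set Implicit Arguments. Unset Strict Implicit. Unset Printing Implicit Defensive.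

Definition dist_le (T : finType) (g : rel T) (k : nat) (u v : T) : Prop :=
  exists p : seq T, [/\ path g u p, last u p = v & size p <= k].

Definition broadcast2 (T : finType) := {ffun T -> 'I_3}.

Definition hears (T : finType) (g : rel T) (f : broadcast2 T) (u v : T) : Prop :=
  0 < f v /\ dist_le g (f v) u v.

Definition dominating2 (T : finType) (g : rel T) (f : broadcast2 T) : Prop :=
  forall u : T, exists v : T, hears g f u v.

Definition cost2 (T : finType) (f : broadcast2 T) : nat := \sum_(v : T) (f v : nat).

Definition is_gamma_b2 (T : finType) (g : rel T) (c : nat) : Prop :=
  (exists f : broadcast2 T, dominating2 g f /\ cost2 f = c) /\
  (forall f : broadcast2 T, dominating2 g f -> c <= cost2 f).

Definition cycle_rel (n : nat) : rel 'I_n :=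
  fun i j => (j == (i.+1 %% n) :> nat) || (i == (j.+1 %% n) :> nat).

Definition cart_rel (A B : finType) (g : rel A) (h : rel B) : rel (A * B) :=
  fun x y => ((x.1 == y.1) && h x.2 y.2) || ((x.2 == y.2) && g x.1 y.1).
Arguments cycle_rel n : clear implicits.

(* Main.v *)
Require Import Defs.
From mathcomp Require Import all_boot zify.
Set Implicit Arguments. Unset Strict Implicit. Unset Printing Implicit Defensive.

Definition G n : rel (prod (ordinal 3) (ordinal n)) := cart_rel (cycle_rel 3) (cycle_rel n).
Notation S := (@ordS _).
Notation Pr := (@ord_pred _).

Lemma edge_cls n (x y : 'I_3 * 'I_n) : G x y ->
  y.2 = x.2 \/ (y.1 = x.1 /\ (y.2 = S x.2 \/ y.2 = Pr x.2)).
Proof.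
case: x y => [x1 x2] [y1 y2]; rewrite /G /cart_rel /cycle_rel /=.
case/orP => /andP[/eqP E H].
- subst x1; right; split=> //; case/orP: H => H.
  + by left; apply/val_inj; apply/eqP.
  + right; have -> : x2 = S y2 by apply/val_inj; apply/eqP.
    by rewrite ordSK.
- by left; rewrite E.
Qed.

Lemma hear_cls (n : nat) (f : broadcast2 ('I_3 * 'I_n)%type) (u1 : 'I_3) (u2 : 'I_n) v :
  hears (@G n) f (u1, u2) v ->
  [\/ v.2 = u2, (f v : nat) = 2 /\ (v.2 = S u2 \/ v.2 = Pr u2),
      v = (u1, S u2) \/ v = (u1, Pr u2) |
      (f v : nat) = 2 /\ (v = (u1, S (S u2)) \/ v = (u1, Pr (Pr u2)))].
Proof.
case=> Hpos [p [Hp Hl Hs]].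
have Hf : (f v : nat) < 3 by case: (f v).
case: p Hp Hl Hs => [|w [|w' [|w'' p]]] /=.
- by move=> _ <- _; constructor 1.
- rewrite andbT => /edge_cls [H|[H1 [H2|H2]]] <- _.
  + by constructor 1.
  + by constructor 3; left; case: w H1 H2 => /= ? ? -> ->.
  + by constructor 3; right; case: w H1 H2 => /= ? ? -> ->.
- rewrite andbT => /andP[/edge_cls Hw /edge_cls Hv] Hl Hs.
  have F2 : (f v : nat) = 2 by move: Hs Hf; case: (f v) => [[|[|[|k]]] ?].
  simpl in Hw.
  subst w'.
  case: Hw => [Hw|[Hw1 [Hw2|Hw2]]]; case: Hv => [Hv|[Hv1 [Hv2|Hv2]]].
  + by constructor 1; rewrite Hv Hw.
  + by constructor 2; split=> //; left; rewrite Hv2 Hw.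
  + by constructor 2; split=> //; right; rewrite Hv2 Hw.
  + by constructor 2; split=> //; left; rewrite Hv Hw2.
  + constructor 4; split=> //; left; by rewrite [v]surjective_pairing Hv1 Hv2 Hw1 Hw2.
  + by constructor 1; rewrite Hv2 Hw2 ordSK.
  + by constructor 2; split=> //; right; rewrite Hv Hw2.
  + by constructor 1; rewrite Hv2 Hw2 ord_predK.
  + constructor 4; split=> //; right; by rewrite [v]surjective_pairing Hv1 Hv2 Hw1 Hw2.
- by move=> _ _ Hs; move: Hs Hf; case: (f v) => [[|[|[|k]]] ?].
Qed.

Notation B n := (broadcast2 ('I_3 * 'I_n)%type).

Definition xc n (f : B n) (i : 'I_n) : nat := \sum_(b < 3) ((f (b, i) : nat) == 2).
Definition yc n (f : B n) (i : 'I_n) : nat := \sum_(b < 3) ((f (b, i) : nat) == 1).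
Definition Ac n (f : B n) i := 0 < xc f i.
Definition cov n (f : B n) i := [|| Ac f (Pr i), Ac f i | Ac f (S i)].
Definition Pc n (f : B n) i := ~~ cov f i && (yc f i == 0).
Definition aa n (f : B n) i := if Ac f i then 4 else 0.
Definition ss n (f : B n) i := if ~~ cov f i && (0 < yc f i) then 4 else 0.
Definition gp n (f : B n) i := if Pc f (S i) && (0 < yc f i) then
  (if Ac f (Pr i) then 6 * yc f i else 3 * yc f i - 2) else 0.
Definition gm n (f : B n) i := if Pc f (Pr i) && (0 < yc f i) then
  (if Ac f (S i) then 6 * yc f i else 3 * yc f i - 2) else 0.
Definition hp n (f : B n) i := if Pc f (S (S i)) && Ac f i then 6 * (xc f i - 1) else 0.
Definition hm n (f : B n) i := if Pc f (Pr (Pr i)) && Ac f i then 6 * (xc f i - 1) else 0.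
Definition pay n (f : B n) i :=
  3 * aa f i + ss f i + gp f i + gm f i + hp f i + hm f i.
Definition recv n (f : B n) j :=
  aa f (Pr j) + aa f j + aa f (S j) + ss f j + gp f (Pr j) + gm f (S j)
  + hp f (Pr (Pr j)) + hm f (S (S j)).

Lemma pay_le n (f : B n) i : pay f i <= 6 * (2 * xc f i + yc f i).
Proof.
rewrite /pay /aa /ss /gp /gm /hp /hm.
have P1 : Pc f (S i) -> ~~ Ac f i /\ ~~ Ac f (S i).
  by rewrite /Pc /cov ordSK => /andP[]; rewrite !negb_or => /and3P[-> -> _].
have P2 : Pc f (Pr i) -> ~~ Ac f i /\ ~~ Ac f (Pr i).
  by rewrite /Pc /cov ord_predK => /andP[]; rewrite !negb_or => /and3P[_ -> ->].
have C1 : Ac f (Pr i) -> cov f i by rewrite /cov => ->.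
have C2 : Ac f (S i) -> cov f i by rewrite /cov => ->; rewrite !orbT.
have C0 : Ac f i -> cov f i by rewrite /cov => ->; rewrite orbT.
move: P1 P2 C1 C2 C0; rewrite /Ac.
case: (Pc f (S i)); case: (Pc f (Pr i)); case: (cov f i);
  case: (0 < xc f (Pr i)); case: (0 < xc f (S i)); case: (ltnP 0 (xc f i));
  case: (ltnP 0 (yc f i)) => //=;
  case: (Pc f (S (S i))); case: (Pc f (Pr (Pr i))) => /=; intros; try lia;
  repeat match goal with H : _ -> _ |- _ => (have := H isT; clear H) || clear H end;
  intros; try lia.
Qed.

Lemma term_le (F : 'I_3 -> nat) b : F b <= \sum_(c < 3) F c.
Proof. by rewrite (bigD1 b) //= leq_addr. Qed.

Lemma x0 n (f : B n) i b : xc f i = 0 -> (f (b, i) : nat) != 2.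
Proof.
move=> H; have := term_le (fun c => (f (c, i) : nat) == 2) b.
by rewrite -/(xc f i) H; case: eqP.
Qed.

Lemma y0 n (f : B n) i b : yc f i = 0 -> (f (b, i) : nat) != 1.
Proof.
move=> H; have := term_le (fun c => (f (c, i) : nat) == 1) b.
by rewrite -/(yc f i) H; case: eqP.
Qed.

Lemma Dlem n (f : B n) (dom : dominating2 (@G n) f) j : Pc f j ->
  3 <= xc f (Pr (Pr j)) + yc f (Pr j) + yc f (S j) + xc f (S (S j)).
Proof.
rewrite /Pc /cov /Ac !negb_or -!eqn0Ngt => /andP[/and3P[/eqP XP /eqP XJ /eqP XS] /eqP YJ].
have H0 b : (f (b, j) : nat) = 0.
  move: (x0 b XJ) (y0 b YJ); case: (f (b, j)) => [[|[|[|k]]] ?] //.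
rewrite /xc /yc -!big_split /=.
apply: (@leq_trans (\sum_(b < 3) 1)); first by rewrite sum_nat_const card_ord.
apply: leq_sum => b _.
have [v Hv] := dom (b, j).
have Hpos : 0 < f v by case: Hv.
case: (hear_cls Hv).
- by move=> E; move: Hpos; rewrite [v]surjective_pairing E H0.
- move=> [F2 [E|E]]; move: F2.
  + by rewrite [v]surjective_pairing E; move/eqP; rewrite (negbTE (x0 _ XS)).
  + by rewrite [v]surjective_pairing E; move/eqP; rewrite (negbTE (x0 _ XP)).
- case=> E; move: Hpos; rewrite E.
  + have := x0 b XS; case: (f (b, S j)) => [[|[|[|k]]] ?] //= _ _; lia.
  + have := x0 b XP; case: (f (b, Pr j)) => [[|[|[|k]]] ?] //= _ _; lia.
- case=> F2 [E|E]; move: F2; rewrite E => F2; rewrite F2 /=; lia.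
Qed.

Lemma arith_recv p q s t : 3 <= p + q + s + t ->
  4 <= (if 0 < q then (if 0 < p then 6 * q else 3 * q - 2) else 0)
     + (if 0 < s then (if 0 < t then 6 * s else 3 * s - 2) else 0)
     + (if 0 < p then 6 * (p - 1) else 0) + (if 0 < t then 6 * (t - 1) else 0).
Proof.
case: p => [|p]; case: q => [|q]; case: s => [|s]; case: t => [|t] /=; lia.
Qed.

Lemma recv_ge n (f : B n) (dom : dominating2 (@G n) f) j : 4 <= recv f j.
Proof.
rewrite /recv.
case C: (cov f j).
  move: C; rewrite /cov /aa; case/or3P => ->; lia.
case Y: (0 < yc f j).
  by rewrite /ss C Y /=; lia.
have PJ : Pc f j by rewrite /Pc C /=; lia.
have := arith_recv (Dlem dom PJ).
rewrite /gp /gm /hp /hm ord_predK ordSK !ord_predK !ordSK PJ /= /Ac.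
lia.
Qed.

Lemma sumPr n (F : 'I_n -> nat) : \sum_(j < n) F (Pr j) = \sum_(j < n) F j.
Proof. by rewrite [RHS](reindex_inj (@ord_pred_inj n)). Qed.
Lemma sumS n (F : 'I_n -> nat) : \sum_(j < n) F (S j) = \sum_(j < n) F j.
Proof. by rewrite [RHS](reindex_inj (@ordS_inj n)). Qed.

Lemma cost_cols n (f : B n) : cost2 f = \sum_(i < n) (2 * xc f i + yc f i).
Proof.
have -> : cost2 f = \sum_(b < 3) \sum_(i < n) (f (b, i) : nat).
  by rewrite pair_bigA; apply: eq_bigr => -[].
rewrite exchange_big; apply: eq_bigr => i _.
rewrite /xc /yc big_distrr -big_split; apply: eq_bigr => b _ /=.
by case: (f (b, i)) => [[|[|[|k]]] ?].
Qed.

Lemma lower n (f : B n) : dominating2 (@G n) f -> 2 * n <= 3 * cost2 f.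
Proof.
move=> dom.
have H1 : 4 * n <= \sum_(j < n) recv f j.
  apply: (@leq_trans (\sum_(j < n) 4)); first by rewrite sum_nat_const card_ord mulnC.
  by apply: leq_sum => j _; apply: recv_ge.
have H2 : \sum_(j < n) recv f j = \sum_(i < n) pay f i.
  rewrite /recv /pay !big_split /= !sumPr !sumS.
  rewrite (sumPr (fun i => hp f (Pr i))) (sumS (fun i => hm f (S i))) !sumPr !sumS big1_eq.
  by rewrite addn0 !addnA.
have H3 : \sum_(i < n) pay f i <= 6 * cost2 f.
  rewrite cost_cols big_distrr; apply: leq_sum => i _; exact: pay_le.
lia.
Qed.

Definition o0 : 'I_3 := @Ordinal 3 0 isT.
Definition o1 : 'I_3 := @Ordinal 3 1 isT.
Definition o2 : 'I_3 := @Ordinal 3 2 isT.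

Definition gval n (k : nat) : 'I_3 :=
  if k %% 3 == 1 then o2 else if (n %% 3 == 1) && (k == n.-1) then o1 else o0.

Definition fup n : B n :=
  [ffun v : ('I_3 * 'I_n)%type => if (v.1 : nat) == 0 then gval n v.2 else o0].

Lemma gsum n N : N <= n ->
  \sum_(0 <= i < N) (gval n i : nat) = 2 * ((N + 1) %/ 3) + ((n %% 3 == 1) && (n <= N)).
Proof.
elim: N => [|N IH] HN; first by rewrite big_nil; case: n HN => [|n'] _ /=; rewrite ?andbF.
rewrite big_nat_recr //= IH; last by lia.
rewrite /gval.
case: (eqVneq (N %% 3) 1) => H1; case: (eqVneq (n %% 3) 1) => H2;
  case: (eqVneq N n.-1) => H3; case: (leqP n N) => H4;
  case: (leqP n N.+1) => H5; rewrite /= ?andbT ?andbF; lia.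
Qed.

Lemma fup_cost n : 0 < n -> cost2 (fup n) = (2 * n + 2) %/ 3.
Proof.
move=> Hn.
have -> : cost2 (fup n) = \sum_(b < 3) \sum_(i < n) (fup n (b, i) : nat).
  by rewrite pair_bigA; apply: eq_bigr => -[].
rewrite big_ord_recl [X in _ + X]big1 ?addn0; last first.
  by move=> b _; apply: big1 => i _; rewrite ffunE.
have -> : \sum_(i < n) (fup n (ord0, i) : nat) = \sum_(i < n) (gval n i : nat).
  by apply: eq_bigr => i _; rewrite ffunE.
rewrite -(big_mkord xpredT (fun i => (gval n i : nat))) gsum // leqnn andbT.
case: (eqVneq (n %% 3) 1) => H /=; lia.
Qed.

Lemma dist_mono (T : finType) (g : rel T) k l u v :
  k <= l -> dist_le g k u v -> dist_le g l u v.
Proof. by move=> kl [p [H1 H2 H3]]; exists p; split=> //; apply: leq_trans kl. Qed.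

Lemma dist_trans (T : finType) (g : rel T) k l u w v :
  dist_le g k u w -> dist_le g l w v -> dist_le g (k + l) u v.
Proof.
move=> [p [H1 H2 H3]] [q [K1 K2 K3]]; exists (p ++ q); split.
- by rewrite cat_path H1 H2 K1.
- by rewrite last_cat H2 K2.
- by rewrite size_cat leq_add.
Qed.

Lemma rowstep n (b : 'I_3) (j : 'I_n) : dist_le (@G n) 1 (b, j) (o0, j).
Proof.
case: (eqVneq b o0) => [->|H]; first by exists [::].
exists [:: (o0, j)]; split=> //=; rewrite andbT /G /cart_rel /=.
rewrite eqxx /=; apply/orP; right; move: H; rewrite /cycle_rel.
by case: b => [[|[|[|k]]] ?].
Qed.

Lemma colS n (j : 'I_n) : dist_le (@G n) 1 (o0, j) (o0, S j).
Proof.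
exists [:: (o0, S j)]; split=> //=; rewrite andbT /G /cart_rel /=.

by rewrite /cycle_rel /= eqxx.
Qed.

Lemma colP n (j : 'I_n) : dist_le (@G n) 1 (o0, j) (o0, Pr j).
Proof.
exists [:: (o0, Pr j)]; split=> //=; rewrite andbT /G /cart_rel /=.
rewrite /cycle_rel; apply/orP; left; apply/orP; right.
by apply/eqP; exact: (esym (congr1 val (ord_predK j))).
Qed.

Lemma valPr n (j : 'I_n) : 0 < j -> (Pr j : nat) = j.-1.
Proof.
move=> Hj /=; have -> : (j + n).-1 = j.-1 + n by lia.
rewrite modnDr modn_small //; have := ltn_ord j; lia.
Qed.

Lemma valS n (j : 'I_n) : j.+1 < n -> (S j : nat) = j.+1.
Proof. by move=> H /=; rewrite modn_small. Qed.

Lemma fupE n (i : 'I_n) : fup n (o0, i) = gval n i.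
Proof. by rewrite ffunE. Qed.

Lemma fup_dom n : 3 <= n -> dominating2 (@G n) (fup n).
Proof.
move=> Hn [b j].
have Hj := ltn_ord j.
case: (eqVneq (j %% 3) 1) => H1.
  exists (o0, j); rewrite /hears fupE /gval H1; split=> //.
  by apply: (dist_mono _ (rowstep b j)).
case: (eqVneq (j %% 3) 2) => H2.
  have Hj0 : 0 < j by case: (nat_of_ord j) H2.
  exists (o0, Pr j); rewrite /hears fupE /gval valPr //.
  have -> : (j.-1 %% 3 == 1) = true by apply/eqP; lia.
  split=> //; exact: (dist_trans (rowstep b j) (colP j)).
case: (ltnP j.+1 n) => H3.
  exists (o0, S j); rewrite /hears fupE /gval valS //.
  have -> : (j.+1 %% 3 == 1) = true by apply/eqP; lia.
  split=> //; exact: (dist_trans (rowstep b j) (colS j)).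
exists (o0, j); rewrite /hears fupE /gval (negbTE H1).
have -> : (n %% 3 == 1) && ((j : nat) == n.-1) = true.
  by apply/andP; split; apply/eqP; lia.
split=> //; exact: rowstep.
Qed.

Theorem theorem4p1 (n : nat) : 3 <= n ->
  is_gamma_b2 (cart_rel (cycle_rel 3) (cycle_rel n)) ((2 * n + 2) %/ 3).
Proof.
move=> Hn.
have L (f : broadcast2 ('I_3 * 'I_n)%type) :
    dominating2 (cart_rel (cycle_rel 3) (cycle_rel n)) f -> (2 * n + 2) %/ 3 <= cost2 f.
  by move=> D; have := lower D; lia.
split; last exact: L.
exists (fup n); split; first exact: fup_dom.
rewrite fup_cost //; lia.
Qed.
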